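(* Let $G=(V,D,B)$ be a mixed graph. For $\Lambda\in\mathbb{R}^D_{\mathrm{reg}}$ and $\Omega\in\mathit{PD}(B)$, let $\Sigma=\phi_G(\Lambda,\Omega)$. Then the rank of the Jacobian $J_G(\Lambda,\Omega)$ equals $\mathrm{rank}(\mathbf{J}(\Lambda,\Sigma))+|B|+|V|$.
   Context: A mixed graph with finite vertex set $V$ is a triple $G=(V,D,B)$ with $D$ a set of ordered pairs $(i,j)$, $i\ne j$ (directed edges $i\to j$) and $B$ a set of unordered pairs $\{i,j\}$, $i\ne j$ (bidirected edges). $\mathbb{R}^D_{\mathrm{reg}}$ is the set of real $V\times V$ matrices $\Lambda=(\lambda_{ij})$ with $\lambda_{ij}=0$ for $(i,j)\notin D$ and $I-\Lambda$ invertible; $\mathit{PD}(B)$ is the set of positive definite symmetric $V\times V$ matrices $\Omega$ with $\omega_{ij}=0$ for $i\neq j$, $\{i,j\}\notin B$. The covariance parametrization is $\phi_G:\mathbb{R}^D_{\mathrm{reg}}\times\mathit{PD}(B)\to\mathit{PD}$, $(\Lambda,\Omega)\mapsto (I-\Lambda)^{-T}\Omega(I-\Lambda)^{-1}$, and $J_G(\Lambda,\Omega)$ is its Jacobian with respect to the free parameters: the entries $\lambda_{kl}$, $(k,l)\in D$, the diagonal entries $\omega_{ii}$, $i\in V$, and the entries $\omega_{ij}$, $\{i,j\}\in B$ (with output the entries $\Sigma_{ij}$ indexed by unordered pairs/diagonal). Let $g(\Lambda,\Sigma)=(I-\Lambda)^T\Sigma(I-\Lambda)$ for $\Lambda\in\mathbb{R}^D_{\mathrm{reg}}$,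 $\Sigma$ positive definite, and let $N=\{\{i,j\}: i,j\in V, i\ne j, \{i,j\}\notin B\}$. Then $\mathbf{J}(\Lambda,\Sigma)$ is the $N\times D$ matrix with entries $\mathbf{J}(\Lambda,\Sigma)_{\{i,j\},(k,l)}=\partial g_{ij}(\Lambda,\Sigma)/\partial\lambda_{kl}$, for $\{i,j\}\in N$, $(k,l)\in D$. *)

(* Defs.v *)
From HB Require Import structures.
From mathcomp Require Import all_boot all_order all_algebra.
From mathcomp Require Import all_classical all_reals.
From mathcomp Require Import topology normedtype derive.
Set Implicit Arguments. Unset Strict Implicit. Unset Printing Implicit Defensive.
Import Order.TTheory GRing.Theory Num.Theory.
Import numFieldNormedType.Exports.
Local Open Scope ring_scope.

Section MixedGraph.
Variables (R : realType) (n : nat).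

(* Vertex set V = 'I_n.  D : rel 'I_n is the set of directed edges (i -> j iff D i j);
   B : rel 'I_n is the (symmetric) set of bidirected edges. *)

Definition phiG (L O : 'M[R]_n) : 'M[R]_n :=
  (invmx (1%:M - L))^T *m O *m invmx (1%:M - L).

Definition gmap (L S : 'M[R]_n) : 'M[R]_n := (1%:M - L)^T *m S *m (1%:M - L).

(* output coordinates of phi_G: entries Sigma_ij indexed by unordered pairs and
   diagonal, represented by (i, j) with i <= j *)
Definition out_set : {set 'I_n * 'I_n} := [set p : 'I_n * 'I_n | (p.1 <= p.2)%N].

(* free parameters: inl (inl (k,l)) = lambda_kl, (k,l) in D;
   inl (inr i) = omega_ii; inr (i,j) = omega_ij with {i,j} in B, represented with i < j *)
Definition param_set (D B : rel 'I_n) : {set ('I_n * 'I_n + 'I_n) + ('I_n * 'I_n)} :=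
  [set x : ('I_n * 'I_n + 'I_n) + ('I_n * 'I_n) | match x with
           | inl (inl p) => D p.1 p.2
           | inl (inr _) => true
           | inr p => (p.1 < p.2)%N && B p.1 p.2
           end].

Definition param_dir (x : ('I_n * 'I_n + 'I_n) + ('I_n * 'I_n)) : 'M[R]_n * 'M[R]_n :=
  match x with
  | inl (inl p) => (delta_mx p.1 p.2, 0)
  | inl (inr i) => (0, delta_mx i i)
  | inr p => (0, delta_mx p.1 p.2 + delta_mx p.2 p.1)
  end.

Definition JG (D B : rel 'I_n) (L O : 'M[R]_n)
  : 'M[R]_(#|out_set|, #|param_set D B|) :=
  \matrix_(r, c)
    let p := @enum_val _ (mem out_set) r in
    let d := param_dir (@enum_val _ (mem (param_set D B)) c) in
    derive1 (fun t : R^o => phiG (L + t *: d.1) (O + t *: d.2) p.1 p.2) 0.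

(* N = non-adjacent (in B) unordered pairs {i,j}, i != j, represented with i < j *)
Definition N_set (B : rel 'I_n) : {set 'I_n * 'I_n} :=
  [set p : 'I_n * 'I_n | (p.1 < p.2)%N && ~~ B p.1 p.2].

Definition D_set (D : rel 'I_n) : {set 'I_n * 'I_n} := [set p : 'I_n * 'I_n | D p.1 p.2].

Definition B_set (B : rel 'I_n) : {set 'I_n * 'I_n} :=
  [set p : 'I_n * 'I_n | (p.1 < p.2)%N && B p.1 p.2].

Definition Jbold (D B : rel 'I_n) (L S : 'M[R]_n)
  : 'M[R]_(#|N_set B|, #|D_set D|) :=
  \matrix_(r, c)
    let p := @enum_val _ (mem (N_set B)) r in
    let e := @enum_val _ (mem (D_set D)) c in
    derive1 (fun t : R^o => gmap (L + t *: delta_mx e.1 e.2) S p.1 p.2) 0.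

Definition posdef (M : 'M[R]_n) : Prop :=
  M^T = M /\ forall x : 'cV[R]_n, x != 0 -> 0 < (x^T *m M *m x) 0 0.

End MixedGraph.

(* Main.v *)
Require Import Defs.
From HB Require Import structures.
From mathcomp Require Import all_boot all_order all_algebra.
From mathcomp Require Import all_classical all_reals.
From mathcomp Require Import topology normedtype derive.
From mathcomp Require Import ring lra.
Import Order.TTheory GRing.Theory Num.Theory.
Import numFieldNormedType.Exports.
Local Open Scope ring_scope.
Local Open Scope classical_set_scope.
Set Implicit Arguments. Unset Strict Implicit. Unset Printing Implicit Defensive.

Section S.
Variable R : realType.
Lemma der_at0 (f g : R^o -> R^o) (b : R) :
  (\forall h \near (0:R^o)^', f h - f 0 = h * g h) -> g @ (0:R^o)^' --> b ->
  derive1 f 0 = b.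
Proof.
move=> Hfg Hg; rewrite /derive1; apply: cvg_lim => //.
apply: cvg_trans Hg; apply: near_eq_cvg; near=> h.
have hn0 : h != 0 by near: h; exact: nbhs_dnbhs_neq.
rewrite addr0 (_ : f h - f 0 = h * g h); last by near: h.
by rewrite /GRing.scale /= mulKf.
Unshelve. all: by end_near. Qed.

Lemma cvg_id0 : (fun h : R^o => h) @ (0:R^o)^' --> (0:R^o).
Proof. exact: nbhs_dnbhs. Qed.

Lemma cvg_1mk (k : R) : (fun h : R^o => 1 - h * k) @ (0:R^o)^' --> (1:R^o).
Proof.
have := cvgB (cvg_cst (1:R^o)) (cvgMr_tmp (b:=k) cvg_id0).
move=> Hf; apply: cvg_trans (Hf _ _ _) _; rewrite mul0r subr0; exact: cvg_refl.
Qed.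

Lemma cvg_w (k : R) : (fun h : R^o => (1 - h * k)^-1) @ (0:R^o)^' --> (1:R^o).
Proof.
have H := cvg_1mk k.
have Hf := cvgV (oner_neq0 _) H.
apply: cvg_trans (Hf _) _; rewrite invr1; exact: cvg_refl.
Qed.
Variable n : nat.

Lemma quad_expand (A P O : 'M[R]_n) (s : R) :
  (A + s *: P)^T *m O *m (A + s *: P) =
  A^T *m O *m A + s *: (P^T *m O *m A + A^T *m O *m P) + (s * s) *: (P^T *m O *m P).
Proof.
have -> : (A + s *: P)^T = A^T + s *: P^T by rewrite linearD linearZ.
rewrite !mulmxDl !mulmxDr -!scalemxAl -!scalemxAr !scalerDr scalerA.
by rewrite !addrA; congr (_ + _); rewrite -!addrA; congr (_ + _); rewrite addrC.
Qed.

Lemma dmx_mid (A : 'M[R]_n) k l :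
  delta_mx k l *m A *m delta_mx k l = A l k *: delta_mx k l.
Proof.
apply/matrixP => i j; rewrite !mxE (bigD1 k) //= big1 => [|a /negbTE akn].
  rewrite !mxE (bigD1 l) //= big1 => [|b /negbTE bln]; last by rewrite !mxE bln andbF mul0r.
  rewrite !mxE !eqxx /= andbT addr0.
  by case: (i == k); case: (j == l); simpl; ring.
by rewrite !mxE akn /= mulr0.
Qed.

Lemma inv_pert (L : 'M[R]_n) k l (t : R) :
  (1%:M - L) \in unitmx ->
  1 - t * (invmx (1%:M - L)) l k != 0 ->
  invmx (1%:M - L - t *: delta_mx k l) =
  invmx (1%:M - L) + (t / (1 - t * (invmx (1%:M - L)) l k)) *:
     (invmx (1%:M - L) *m delta_mx k l *m invmx (1%:M - L)).
Proof.
set IL := 1%:M - L; set A := invmx IL; set c := A l k; set Δ := delta_mx k l.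
move=> hu hc.
set X := A + _.
have HM : (IL - t *: Δ) *m X = 1%:M.
  rewrite /X mulmxBl !mulmxDr -!scalemxAl -!scalemxAr !mulmxA mulmxV //.
  rewrite mul1mx dmx_mid -scalemxAl scalerA.
  set Q := Δ *m A.
  rewrite -/c; clearbody Q c.
  have key : t / (1 - t * c) - t - t * (t / (1 - t * c) * c) = 0.
    by field.
  apply/matrixP => i j; rewrite !mxE.
  apply/eqP; rewrite -subr_eq0; apply/eqP.
  transitivity ((t / (1 - t * c) - t - t * (t / (1 - t * c) * c)) * Q i j).
    by ring.
  by rewrite key mul0r.
have [Hu _] := mulmx1_unit HM.
by rewrite -[RHS](mulKmx Hu X) HM mulmx1.
Qed.

Lemma der_lam (L O : 'M[R]_n) k l i j :
  (1%:M - L) \in unitmx ->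
  derive1 (fun t : R^o => phiG (L + t *: delta_mx k l) (O + t *: 0) i j) 0 =
  (let A := invmx (1%:M - L) in let P := A *m delta_mx k l *m A in
   (P^T *m O *m A + A^T *m O *m P) i j).
Proof.
move=> hu /=.
set A := invmx (1%:M - L); set P := A *m delta_mx k l *m A.
set c := A l k.
pose w := fun h : R => (1 - h * c)^-1.
apply: (@der_at0 _ (fun h => w h * (P^T *m O *m A + A^T *m O *m P) i j
                          + w h * (h * w h) * (P^T *m O *m P) i j)).
  near=> h.
  have hc : 1 - h * c != 0 by near: h; apply: cvgr_neq0 (cvg_1mk c) (oner_neq0 _).
  rewrite /phiG !scaler0 !addr0 scale0r addr0 opprD addrA inv_pert // -/A -/c -/P.
  rewrite quad_expand !mxE /w.
  clearbody A P c.
  ring.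
have H1 := cvg_w c.
have H2 := cvgD (cvgMr_tmp (b := (P^T *m O *m A + A^T *m O *m P) i j) H1)
     (cvgMr_tmp (b := (P^T *m O *m P) i j) (cvgM H1 (cvgM cvg_id0 H1))).
apply: cvg_trans (H2 _ _ _ _ _) _.
rewrite mul0r mulr0 mul0r addr0 mul1r; exact: cvg_refl.
Unshelve. all: by end_near. Qed.

Lemma der_om (L O E : 'M[R]_n) i j :
  derive1 (fun t : R^o => phiG (L + t *: 0) (O + t *: E) i j) 0 =
  ((invmx (1%:M - L))^T *m E *m invmx (1%:M - L)) i j.
Proof.
set A := invmx (1%:M - L).
apply: (@der_at0 _ (fun _ => (A^T *m E *m A) i j)); last exact: cvg_cst.
near=> h.
rewrite /phiG !scaler0 !addr0 scale0r addr0 -/A mulmxDr mulmxDl -scalemxAr -scalemxAl.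
rewrite !mxE; clearbody A; ring.
Unshelve. all: by end_near. Qed.

Lemma der_g (L S : 'M[R]_n) k l i j :
  derive1 (fun t : R^o => gmap (L + t *: delta_mx k l) S i j) 0 =
  - ((delta_mx k l)^T *m S *m (1%:M - L) + (1%:M - L)^T *m S *m delta_mx k l) i j.
Proof.
set IL := 1%:M - L; set Δ := delta_mx k l.
apply: (@der_at0 _ (fun h => - (Δ^T *m S *m IL + IL^T *m S *m Δ) i j
                               + h * (Δ^T *m S *m Δ) i j)).
  near=> h.
  rewrite /gmap scale0r addr0 opprD addrA -scaleNr -/IL quad_expand !mxE.
  clearbody IL Δ; ring.
have H2 := cvgD (cvg_cst (- (Δ^T *m S *m IL + IL^T *m S *m Δ) i j : R^o))
     (cvgMr_tmp (b := (Δ^T *m S *m Δ) i j) cvg_id0).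
apply: cvg_trans (H2 _ _ _) _.
rewrite mul0r addr0; exact: cvg_refl.
Unshelve. all: by end_near. Qed.
End S.

Local Close Scope classical_set_scope.
Section LA.
Variable R : realType.

Lemma sum_enum (T : finType) (A : {set T}) x (xA : x \in A) (F : 'I_#|A| -> R) :
  \sum_p F p * (enum_val p == x)%:R = F (enum_rank_in xA x).
Proof.
rewrite (bigD1 (enum_rank_in xA x)) //= enum_rankK_in // eqxx mulr1 big1 ?addr0 //.
move=> p hp; rewrite (_ : (enum_val p == x) = false) ?mulr0 //.
apply/negbTE; apply: contra hp => /eqP H.
by rewrite -[p](enum_valK_in xA) H.
Qed.

Lemma sum_enum_out (T : finType) (A : {set T}) x (xA : x \notin A) (F : 'I_#|A| -> R) :
  \sum_p F p * (enum_val p == x)%:R = 0.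
Proof.
apply: big1 => p _; rewrite (_ : (enum_val p == x) = false) ?mulr0 //.
apply/negbTE; apply: contra xA => /eqP <-; exact: enum_valP.
Qed.

Lemma linear_rowmx (m k : nat) (f : 'rV[R]_m -> 'rV[R]_k) :
  (forall a u v, f (a *: u + v) = a *: f u + f v) ->
  forall u, u *m (\matrix_(i < m) f (delta_mx 0 i)) = f u.
Proof.
move=> hf u.
have f0 : f 0 = 0.
  have := hf 1 0 0; rewrite scaler0 add0r scale1r => H.
  by apply: (addrI (f 0)); rewrite addr0 -H.
have fD : forall u v, f (u + v) = f u + f v.
  by move=> u' v'; have := hf 1 u' v'; rewrite !scale1r.
have fZ : forall a u, f (a *: u) = a *: f u.
  by move=> a u'; have := hf a u' 0; rewrite !addr0 f0 addr0.
rewrite mulmx_sum_row {2}(row_sum_delta u) (big_morph f fD f0).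
by apply: eq_bigr => i _; rewrite rowK fZ.
Qed.

Lemma rank_sandwich (m a b : nat) (X : 'M[R]_(m, a)) (Y : 'M[R]_(m, b)) F G :
  X = Y *m F -> Y = X *m G -> \rank X = \rank Y.
Proof.
move=> HX HY; apply/eqP; rewrite eqn_leq.
by rewrite {1}HX mxrankM_maxl /= {1}HY mxrankM_maxl.
Qed.

Lemma rank_sandwichL (m1 m2 a : nat) (X : 'M[R]_(m1, a)) (Y : 'M[R]_(m2, a)) F G :
  X = F *m Y -> Y = G *m X -> \rank X = \rank Y.
Proof.
move=> HX HY; apply/eqP; rewrite eqn_leq.
by rewrite {1}HX mxrankM_maxr /= {1}HY mxrankM_maxr.
Qed.

Variable n : nat.


Definition keyp (i j : 'I_n) : 'I_n * 'I_n := if (i <= j)%N then (i, j) else (j, i).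

Lemma keyp_out i j : keyp i j \in out_set n.
Proof. rewrite /keyp /out_set inE; by case: (leqP i j) => [h|/ltnW h]. Qed.

Definition piO (M : 'M[R]_n) : 'rV[R]_#|out_set n| :=
  \row_r M (enum_val r).1 (enum_val r).2.

Definition iotaO (v : 'rV[R]_#|out_set n|) : 'M[R]_n :=
  \matrix_(i, j) \sum_r v 0 r * (enum_val r == keyp i j)%:R.

Lemma piO_lin a (M1 M2 : 'M[R]_n) : piO (a *: M1 + M2) = a *: piO M1 + piO M2.
Proof. by apply/rowP => r; rewrite !mxE. Qed.

Lemma iotaO_lin a u v : iotaO (a *: u + v) = a *: iotaO u + iotaO v.
Proof.
apply/matrixP => i j; rewrite !mxE mulr_sumr -big_split /=.
by apply: eq_bigr => r _; rewrite !mxE mulrDl mulrA.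
Qed.

Lemma iotaOK v : piO (iotaO v) = v.
Proof.
apply/rowP => r; rewrite !mxE.
have Hr := enum_valP r; rewrite /out_set inE in Hr.
have -> : keyp (enum_val r).1 (enum_val r).2 = enum_val r.
  by rewrite /keyp Hr; case: (enum_val r).
rewrite (bigD1 r) //= eqxx mulr1 big1 ?addr0 // => p hp.
rewrite (_ : (enum_val p == enum_val r) = false) ?mulr0 //.
by apply/negbTE; apply: contra hp => /eqP /enum_val_inj ->.
Qed.

Lemma piOK (M : 'M[R]_n) : M^T = M -> iotaO (piO M) = M.
Proof.
move=> HM; apply/matrixP => i j; rewrite mxE.
under eq_bigr do rewrite mxE.
rewrite (@sum_enum _ _ _ (keyp_out i j) (fun r => M (enum_val r).1 (enum_val r).2)).
rewrite enum_rankK_in ?keyp_out // /keyp.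
case: leqP => //= _.
by rewrite -{1}HM mxE.
Qed.

Lemma rank_transform (m : nat) (Hs : 'I_m -> 'M[R]_n) (T U : 'M[R]_n) :
  T *m U = 1%:M -> (forall c, (Hs c)^T = Hs c) ->
  \rank (\matrix_(c < m) piO (T^T *m Hs c *m T)) = \rank (\matrix_(c < m) piO (Hs c)).
Proof.
move=> TU Hsym.
have lin : forall V : 'M[R]_n, forall a u v,
    piO (V^T *m iotaO (a *: u + v) *m V) =
    a *: piO (V^T *m iotaO u *m V) + piO (V^T *m iotaO v *m V).
  by move=> V a u v; rewrite iotaO_lin mulmxDr mulmxDl -scalemxAr -scalemxAl piO_lin.
pose Fm := \matrix_(q < #|out_set n|) piO (T^T *m iotaO (delta_mx 0 q) *m T).
pose Gm := \matrix_(q < #|out_set n|) piO (U^T *m iotaO (delta_mx 0 q) *m U).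
apply: (@rank_sandwich _ _ _ _ _ Fm Gm).
  apply/row_matrixP => c; rewrite row_mul !rowK /Fm.
  rewrite (@linear_rowmx _ _ (fun v => piO (T^T *m iotaO v *m T))); last exact: lin.
  by rewrite piOK.
apply/row_matrixP => c; rewrite row_mul !rowK /Gm.
rewrite (@linear_rowmx _ _ (fun v => piO (U^T *m iotaO v *m U))); last exact: lin.
rewrite piOK; last by rewrite !trmx_mul trmxK Hsym !mulmxA.
by rewrite -!mulmxA TU mulmx1 !mulmxA -trmx_mul TU trmx1 mul1mx.
Qed.

End LA.

Section LA2.
Variables (R : realType) (n : nat) (D B : rel 'I_n) (S IL : 'M[R]_n).

Definition HmL (e : 'I_n * 'I_n) : 'M[R]_n :=
  (delta_mx e.1 e.2)^T *m S *m IL + IL^T *m S *m delta_mx e.1 e.2.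
Definition Hm (d : 'M[R]_n * 'M[R]_n) : 'M[R]_n :=
  d.1^T *m S *m IL + IL^T *m S *m d.1 + d.2.
Definition Hc (c : 'I_#|param_set D B|) := Hm (param_dir R (enum_val c)).
Definition Ymx := \matrix_(c < #|param_set D B|) piO (Hc c).
Definition piN (M : 'M[R]_n) : 'rV[R]_#|N_set B| := \row_r M (enum_val r).1 (enum_val r).2.
Definition Pr : 'M[R]_(#|out_set n|, #|N_set B|) :=
  \matrix_(p, r) (enum_val p == enum_val r :> 'I_n * 'I_n)%:R.

Lemma N_out x : x \in N_set B -> x \in out_set n.
Proof. by rewrite /N_set /out_set !inE => /andP [/ltnW]. Qed.

Lemma piOPr (H : 'M[R]_n) : piO H *m Pr = piN H.
Proof.
apply/rowP => r; rewrite !mxE.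
under eq_bigr do rewrite !mxE.
rewrite (@sum_enum _ _ _ _ (N_out (enum_valP r))
   (fun p => H (enum_val p).1 (enum_val p).2)).
by rewrite enum_rankK_in // N_out // enum_valP.
Qed.

Lemma YPr : Ymx *m Pr = \matrix_c piN (Hc c).
Proof. by apply/row_matrixP => c; rewrite row_mul !rowK piOPr. Qed.

Lemma Hc_N c (r : 'I_#|N_set B|) : (forall e, enum_val c != inl (inl e)) ->
  Hc c (enum_val r).1 (enum_val r).2 = 0.
Proof.
move=> Hne.
have Hr := enum_valP r; rewrite /N_set inE in Hr; case/andP: Hr => lt nB.
have Hc' := enum_valP c; rewrite /param_set inE in Hc'.
rewrite /Hc /Hm; move: Hne Hc'; case: (enum_val c) => [[e|i]|e] Hne Hc' /=.
- by have := Hne e; rewrite eqxx.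
- rewrite trmx0 !mul0mx !mulmx0 !add0r mxE.
  case: eqP => [Ei|]; last by rewrite andFb.
  case: eqP => [Ej|]; last by rewrite andbF.
  by move: lt; rewrite Ei Ej ltnn.
- rewrite trmx0 !mul0mx !mulmx0 !add0r !mxE.
  case/andP: Hc' => lte Be.
  have h1 : ((enum_val r).1 == e.1) && ((enum_val r).2 == e.2) = false.
    apply/negbTE/negP => /andP [/eqP E1 /eqP E2].
    by move: nB; rewrite E1 E2 Be.
  have h2 : ((enum_val r).1 == e.2) && ((enum_val r).2 == e.1) = false.
    apply/negbTE/negP => /andP [/eqP E1 /eqP E2].
    by move: lt; rewrite E1 E2 => lt; move: (ltn_trans lt lte); rewrite ltnn.
  by rewrite h1 h2 addr0.
Qed.

Lemma rank_YPr (Jb : 'M[R]_(#|N_set B|, #|D_set D|)) :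
  (forall r d, Jb r d = - HmL (enum_val d) (enum_val r).1 (enum_val r).2) ->
  \rank (Ymx *m Pr) = \rank Jb.
Proof.
move=> HJb; rewrite YPr -(mxrank_tr Jb).
pose P1 := \matrix_(c < #|param_set D B|, d < #|D_set D|)
   - ((enum_val c == inl (inl (enum_val d)) :> ('I_n * 'I_n + 'I_n) + ('I_n * 'I_n))%:R : R).
pose P2 := \matrix_(d < #|D_set D|, c < #|param_set D B|)
   - ((enum_val c == inl (inl (enum_val d)) :> ('I_n * 'I_n + 'I_n) + ('I_n * 'I_n))%:R : R).
apply: (@rank_sandwichL _ _ _ _ _ _ P1 P2).
  apply/matrixP => c r; rewrite [RHS]mxE [LHS]mxE [LHS]mxE.
  under eq_bigr do rewrite !mxE HJb mulrN mulNr opprK.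
  case E: (enum_val c) => [[e|i]|e].
  - have He : e \in D_set D.
      by have := enum_valP c; rewrite E /param_set /D_set !inE.
    have Heq : forall d : 'I_#|D_set D|, (inl (inl e) == inl (inl (enum_val d))
       :> ('I_n * 'I_n + 'I_n) + ('I_n * 'I_n)) = (enum_val d == e).
      by move=> d; apply/eqP/eqP => [[->]|->].
    under eq_bigr do rewrite Heq mulrC.
    rewrite (@sum_enum _ _ _ _ He (fun d => HmL (enum_val d) (enum_val r).1 (enum_val r).2)).
    by rewrite enum_rankK_in // /Hc /Hm E /= addr0.
  - rewrite Hc_N ?E // big1 // => d _; by rewrite mul0r.
  - rewrite Hc_N ?E // big1 // => d _; by rewrite mul0r.
apply/matrixP => d r; rewrite [RHS]mxE [LHS]mxE HJb.
under eq_bigr do rewrite [P2 _ _]mxE [X in _ * X]mxE [X in _ * X]mxE mulNr mulrC.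
rewrite sumrN; congr (- _).
have Hd : (inl (inl (enum_val d)) : ('I_n * 'I_n + 'I_n) + ('I_n * 'I_n)) \in param_set D B.
  by have := enum_valP d; rewrite /param_set /D_set !inE.
rewrite (@sum_enum _ _ _ _ Hd (fun c => Hc c (enum_val r).1 (enum_val r).2)).
by rewrite /Hc enum_rankK_in // /Hm /= addr0.
Qed.


Lemma e_row (p : 'I_#|out_set n|) (M : 'M[R]_n) :
  (forall r : 'I_#|out_set n|, M (enum_val r).1 (enum_val r).2 = (enum_val r == enum_val p)%:R) ->
  piO M = delta_mx 0 p.
Proof.
by move=> H; apply/rowP => r; rewrite !mxE H (inj_eq enum_val_inj).
Qed.

Lemma kerY : (kermx Pr <= Ymx)%MS.
Proof.
apply/row_subP => q; set v := row q (kermx Pr).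
have Hv : v *m Pr = 0 by rewrite /v -row_mul mulmx_ker row0.
rewrite (row_sum_delta v); apply: summx_sub => p _.
have Hp := enum_valP p.
case HN: (enum_val p \in N_set B).
  have : (v *m Pr) 0 (enum_rank_in HN (enum_val p)) = 0 by rewrite Hv mxE.
  rewrite mxE; under eq_bigr do rewrite [Pr _ _]mxE enum_rankK_in //.
  rewrite (@sum_enum _ _ _ _ Hp (fun p' => v 0 p')) enum_valK_in => ->.
  by rewrite scale0r sub0mx.
apply: scalemx_sub.
move: Hp HN; rewrite /out_set /N_set !inE.
case Ex: (enum_val p) => [a b] /= hab.
have [Eab|Nab] := eqVneq a b.
  move=> _.
  have Hcx : (inr (a, a) : ('I_n * 'I_n + 'I_n) + ('I_n * 'I_n)) \in param_set D B = false.
    by rewrite /param_set inE /= ltnn.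
  have Hcx' : (inl (inr a) : ('I_n * 'I_n + 'I_n) + ('I_n * 'I_n)) \in param_set D B.
    by rewrite /param_set inE.
  suff -> : delta_mx 0 p = row (enum_rank_in Hcx' (inl (inr a))) Ymx by exact: row_sub.
  rewrite rowK; symmetry; apply: e_row.
  move=> r; rewrite /Hc enum_rankK_in // /Hm /= trmx0 !mul0mx !mulmx0 !add0r mxE Ex -Eab.
  by case: (enum_val r) => r1 r2; rewrite xpair_eqE.
rewrite (ltn_neqAle a b) Nab hab /= => /negbT; rewrite negbK => Bab.
have ltab : (a < b)%N by rewrite ltn_neqAle Nab hab.
have Hcx' : (inr (a, b) : ('I_n * 'I_n + 'I_n) + ('I_n * 'I_n)) \in param_set D B.
  by rewrite /param_set inE /= ltab Bab.
  suff -> : delta_mx 0 p = row (enum_rank_in Hcx' (inr (a, b))) Ymx by exact: row_sub.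
  rewrite rowK; symmetry; apply: e_row.
move=> r; rewrite /Hc enum_rankK_in // /Hm /= trmx0 !mul0mx !mulmx0 !add0r !mxE Ex.
have := enum_valP r; rewrite /out_set inE.
case: (enum_val r) => r1 r2 /= hr; rewrite xpair_eqE.
have -> : (r1 == b) && (r2 == a) = false.
  apply/negbTE/negP => /andP [/eqP E1 /eqP E2].
  by move: hr; rewrite E1 E2 leqNgt ltab.
by rewrite addr0.
Qed.

Lemma rankPr : \rank Pr = #|N_set B|.
Proof.
apply/eqP; rewrite eqn_leq rank_leq_col /=.
have H : Pr^T *m Pr = 1%:M.
  apply/matrixP => r r'; rewrite !mxE.
  under eq_bigr do rewrite !mxE.
  rewrite (@sum_enum _ _ _ _ (N_out (enum_valP r')) (fun p => (enum_val p == enum_val r)%:R)).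
  by rewrite enum_rankK_in ?N_out ?enum_valP // (inj_eq enum_val_inj) eq_sym.
by rewrite -{1}(mxrank1 R #|N_set B|) -H mxrankM_maxr.
Qed.

Lemma card_out : #|out_set n| = (#|N_set B| + #|B_set B| + n)%N.
Proof.
pose St := [set p : 'I_n * 'I_n | (p.1 < p.2)%N].
have H1 : #|St| = (#|N_set B| + #|B_set B|)%N.
  rewrite -(cardsID (B_set B) St) addnC.
  have -> : St :&: B_set B = B_set B.
    by apply/setP => x; rewrite /St /N_set /B_set !inE; case: (x.1 < x.2)%N; case: (B x.1 x.2).
  have -> : St :\: B_set B = N_set B.
    by apply/setP => x; rewrite /St /N_set /B_set !inE; case: (x.1 < x.2)%N; case: (B x.1 x.2).
  by [].
have H2 : #|out_set n :\: St| = n.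
  have -> : out_set n :\: St = [set (i, i) | i in [set: 'I_n]].
    apply/setP => [[a b]]; rewrite /out_set /St !inE /= -leqNgt.
    apply/idP/imsetP => [|[i _ [-> ->]]]; last by rewrite leqnn.
    move=> /andP [h1 h2]; exists a; first by rewrite inE.
    by rewrite (_ : b = a) //; apply/val_inj/eqP; rewrite eqn_leq h1 h2.
  rewrite (@card_imset _ _ (fun i : 'I_n => (i, i))) ?cardsT ?card_ord //.
  by move=> i j [].
have H3 : out_set n :&: St = St.
  apply/setP => x; rewrite /out_set /St !inE.
  by apply/andP/idP => [[]//|h]; split => //; exact: ltnW.
by rewrite -(cardsID St (out_set n)) H3 H2 H1.
Qed.

Lemma rankY (Jb : 'M[R]_(#|N_set B|, #|D_set D|)) :
  (forall r d, Jb r d = - HmL (enum_val d) (enum_val r).1 (enum_val r).2) ->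
  \rank Ymx = (\rank Jb + #|B_set B| + n)%N.
Proof.
move=> HJb; rewrite -(mxrank_mul_ker Ymx Pr) (rank_YPr HJb).
have /eqmxP/eqmx_rank -> := capmx_idPr kerY.
rewrite mxrank_ker rankPr card_out.
by rewrite -!addnA addKn.
Qed.
Lemma Hm_sym (ST : S^T = S) (d : 'M[R]_n * 'M[R]_n) : d.2^T = d.2 -> (Hm d)^T = Hm d.
Proof.
move=> H; rewrite /Hm !linearD /= !trmx_mul !trmxK ST H !mulmxA.
by congr (_ + _); rewrite addrC.
Qed.
End LA2.

Unset Implicit Arguments.
Theorem lemma1 (R : realType) (n : nat) (D B : rel 'I_n)
  (D_irr : forall i, ~~ D i i)
  (B_irr : forall i, ~~ B i i)
  (B_sym : forall i j, B i j = B j i)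
  (L O : 'M[R]_n)
  (L_supp : forall i j, ~~ D i j -> L i j = 0)
  (L_reg : (1%:M - L) \in unitmx)
  (O_pd : posdef O)
  (O_supp : forall i j, i != j -> ~~ B i j -> O i j = 0) :
  let S := phiG L O in
  \rank (JG D B L O) = (\rank (Jbold D B L S) + #|B_set B| + n)%N.
Proof.
move=> S.
set IL := 1%:M - L; set A := invmx IL.
have hIA : IL *m A = 1%:M := mulmxV L_reg.
have hAI : A *m IL = 1%:M := mulVmx L_reg.
have OT : O^T = O := O_pd.1.
have SE : S = A^T *m O *m A by [].
have ST : S^T = S by rewrite SE !trmx_mul trmxK OT !mulmxA.
have Hsym : forall c : 'I_#|param_set D B|, (Hc S IL c)^T = Hc S IL c.
  move=> c; apply: Hm_sym => //; case: (enum_val c) => [[e|i]|e] /=.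
  - by rewrite trmx0.
  - by rewrite trmx_delta.
  - by rewrite linearD /= !trmx_delta addrC.
have HJG : (JG D B L O)^T = \matrix_c piO (A^T *m Hc S IL c *m A).
  apply/matrixP => c r; rewrite [RHS]mxE [RHS]mxE [LHS]mxE [LHS]mxE /=.
  rewrite /Hc /Hm; case: (enum_val c) => [[e|i]|e] /=.
  - rewrite der_lam // -/IL -/A addr0; congr (fun_of_matrix _ _ _).
    rewrite mulmxDr mulmxDl; congr (_ + _).
      have -> : A^T *m ((delta_mx e.1 e.2)^T *m S *m IL) *m A =
                A^T *m (delta_mx e.1 e.2)^T *m S *m (IL *m A) by rewrite !mulmxA.
      by rewrite hIA mulmx1 SE !trmx_mul !mulmxA.
    have -> : A^T *m (IL^T *m S *m delta_mx e.1 e.2) *m A =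
              (IL *m A)^T *m S *m delta_mx e.1 e.2 *m A by rewrite trmx_mul !mulmxA.
    by rewrite hIA trmx1 mul1mx SE !mulmxA.
  - by rewrite der_om -/IL -/A trmx0 !mul0mx !mulmx0 !add0r.
  - by rewrite der_om -/IL -/A trmx0 !mul0mx !mulmx0 !add0r.
rewrite -mxrank_tr HJG (rank_transform hAI Hsym).
apply: rankY => r d.
rewrite mxE /= der_g.
by [].
Qed.
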